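(* Either $g(n)\le 3$ for all $n$ or $g(n)\to\infty$; either $h(n)\le 3$ for all $n$ or $h(n)\to\infty$; and either $f(n)\le 9$ for all $n$ or $f(n)\to\infty$.
   Context: For a digraph $D$, $\chi(D)$ is the chromatic number of its underlying graph; $D^{-1}$ is $D$ with arcs reversed; $D_1\times D_2$ has vertex set $V(D_1)\times V(D_2)$ and arc $(x,y)\to(x',y')$ iff $(x,x')$ is an arc of $D_1$ and $(y,y')$ an arc of $D_2$ (graph product $G\times H$ analogously with edges: $(x,y)\sim(x',y')$ iff $xx'\in E(G)$, $yy'\in E(H)$). $f(n)=\min\{\chi(G\times H):\chi(G),\chi(H)\ge n\}$ over graphs; $g(n)=\min\{\chi(D_1\times D_2):\chi(D_1),\chi(D_2)\ge n\}$ and $h(n)=\min\{\max\{\chi(D_1\times D_2),\chi(D_1\times D_2^{-1})\}:\chi(D_1),\chi(D_2)\ge n\}$ over digraphs (digons allowed). These functions are non-decreasing in $n$. *)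

(* Defs.v *)
From mathcomp Require Import all_boot.
From Stdlib Require Import ClassicalEpsilon.
Set Implicit Arguments. Unset Strict Implicit. Unset Printing Implicit Defensive.

Definition is_graph (T : finType) (e : rel T) : Prop :=
  (forall x, ~~ e x x) /\ (forall x y, e x y = e y x).

(* A (finite) digraph: loopless arc relation; digons (x->y and y->x) allowed. *)
Definition is_digraph (T : finType) (a : rel T) : Prop := forall x, ~~ a x x.

Definition colorable (T : finType) (e : rel T) (k : nat) : bool :=
  [exists c : {ffun T -> 'I_k}, [forall x, [forall y, e x y ==> (c x != c y)]]].

(* chromatic number: least k <= #|T| admitting a proper colouring
   (always exists for loopless relations, since #|T| colours suffice). *)
Definition chi (T : finType) (e : rel T) : nat :=
  find (colorable e) (iota 0 #|T|.+1).

Definition underlying (T : finType) (a : rel T) : rel T := fun x y => a x y || a y x.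
Definition chiD (T : finType) (a : rel T) : nat := chi (underlying a).

Definition prodrel (T U : finType) (e : rel T) (e' : rel U) : rel (T * U)%type :=
  fun p q => e p.1 q.1 && e' p.2 q.2.

Definition revrel (T : finType) (a : rel T) : rel T := fun x y => a y x.

(* minimum of a set of naturals (chosen by epsilon; it exists whenever P is nonempty) *)
Definition is_min (P : nat -> Prop) (m : nat) : Prop := P m /\ forall k, P k -> m <= k.
Definition natmin (P : nat -> Prop) : nat := epsilon (inhabits 0) (is_min P).

Definition f_vals (n k : nat) : Prop :=
  exists (T U : finType) (e : rel T) (e' : rel U),
    [/\ is_graph e, is_graph e', n <= chi e, n <= chi e' & chi (prodrel e e') = k].
Definition g_vals (n k : nat) : Prop :=
  exists (T U : finType) (a : rel T) (a' : rel U),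
    [/\ is_digraph a, is_digraph a', n <= chiD a, n <= chiD a' & chiD (prodrel a a') = k].
Definition h_vals (n k : nat) : Prop :=
  exists (T U : finType) (a : rel T) (a' : rel U),
    [/\ is_digraph a, is_digraph a', n <= chiD a, n <= chiD a' &
        maxn (chiD (prodrel a a')) (chiD (prodrel a (revrel a'))) = k].

Definition f (n : nat) : nat := natmin (f_vals n).
Definition g (n : nat) : nat := natmin (g_vals n).
Definition h (n : nat) : nat := natmin (h_vals n).

Definition tends_to_infty (u : nat -> nat) : Prop :=
  forall M, exists N, forall n, N <= n -> M < u n.

(* Main.v *)
Require Import Defs.
From mathcomp Require Import all_boot zify.
From Stdlib Require Import Classical ClassicalEpsilon.
Set Implicit Arguments. Unset Strict Implicit. Unset Printing Implicit Defensive.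

Section Basics.
Variables (T : finType) (e : rel T).

Lemma colorableP k :
  colorable e k <-> exists c : T -> 'I_k, forall x y, e x y -> c x != c y.
Proof.
split.
- move=> /existsP [c /forallP H]; exists c => x y exy.
  by move: (H x) => /forallP /(_ y) /implyP; apply.
- move=> [c H]; apply/existsP; exists [ffun x => c x]; apply/forallP => x.
  apply/forallP => y; apply/implyP => exy; rewrite !ffunE; exact: H.
Qed.

Lemma col_fun (C : finType) (c : T -> C) k :
  #|C| <= k -> (forall x y, e x y -> c x != c y) -> colorable e k.
Proof.
move=> Hk H; apply/colorableP.
exists (fun x => widen_ord Hk (enum_rank (c x))) => x y exy.
apply/negP => /eqP E; move: (H x y exy) => /negP; apply; apply/eqP.
apply: enum_rank_inj; apply: val_inj; move: E => /(congr1 val) /=; done.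
Qed.

Lemma col_loopless k : colorable e k -> forall x, ~~ e x x.
Proof. move=> /colorableP [c H] x; apply/negP => /H; by rewrite eqxx. Qed.

Lemma col_card : (forall x, ~~ e x x) -> colorable e #|T|.
Proof.
move=> H; apply: (@col_fun T id) => // x y exy; apply/negP => /eqP E.
by move: exy; rewrite E (negbTE (H y)).
Qed.

Lemma chi_le k : colorable e k -> chi e <= k.
Proof.
move=> Hc.
have aux : forall j, j <= #|T| -> colorable e j -> chi e <= j.
  move=> j Hj Hcj; rewrite /chi; case: (leqP (find (colorable e) (iota 0 #|T|.+1)) j) => // Hlt.
  have := before_find 0 Hlt; rewrite nth_iota ?add0n ?Hcj //; lia.
case: (leqP k #|T|) => Hk; first exact: aux.
have := aux _ (leqnn _) (col_card (col_loopless Hc)); lia.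
Qed.

Lemma chi_col : (forall x, ~~ e x x) -> colorable e (chi e).
Proof.
move=> H; rewrite /chi.
have Hh : has (colorable e) (iota 0 #|T|.+1).
  apply/hasP; exists #|T|; last exact: col_card.
  by rewrite mem_iota /=.
have := nth_find 0 Hh; rewrite nth_iota ?add0n //.
by move: Hh; rewrite has_find size_iota.
Qed.

Lemma col_mono k k' : colorable e k -> k <= k' -> colorable e k'.
Proof.
move=> /colorableP [c H] Hk; apply: (@col_fun _ c); by rewrite ?card_ord.
Qed.

Lemma complete_col k : (forall x y, x != y -> e x y) -> colorable e k -> #|T| <= k.
Proof.
move=> Hcomp /colorableP [c H].
have inj : injective c.
  move=> x y Exy; apply/eqP; apply/negP => /negP /Hcomp /H; by rewrite Exy eqxx.
by have := leq_card c inj; rewrite card_ord.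
Qed.

End Basics.

Lemma hom_col (T T' : finType) (e : rel T) (e' : rel T') (h : T -> T') k :
  (forall x y, e x y -> e' (h x) (h y)) -> colorable e' k -> colorable e k.
Proof.
move=> Hh /colorableP [c H]; apply: (@col_fun _ _ _ (fun x => c (h x))); first by rewrite card_ord.
move=> x y /Hh; exact: H.
Qed.

Lemma hom_U (T T' : finType) (a : rel T) (a' : rel T') (h : T -> T') :
  (forall x y, a x y -> a' (h x) (h y)) ->
  forall x y, underlying a x y -> underlying a' (h x) (h y).
Proof. by move=> H x y /orP [/H E | /H E]; rewrite /underlying E ?orbT. Qed.

Definition arcT (T : finType) (a : rel T) : finType := {p : T * T | a p.1 p.2}.
Definition arcrel (T : finType) (a : rel T) : rel (arcT a) :=
  fun p q => (val p).2 == (val q).1.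
Arguments arcrel {T} a p q.

Lemma arc_digraph (T : finType) (a : rel T) : is_digraph a -> is_digraph (arcrel a).
Proof.
move=> Ha [[x y] /= axy]; apply/negP; rewrite /arcrel /= => /eqP E.
by move: axy; rewrite E (negbTE (Ha x)).
Qed.

Lemma U_loopless (T : finType) (a : rel T) : is_digraph a -> forall x, ~~ underlying a x x.
Proof. by move=> Ha x; rewrite /underlying orbb Ha. Qed.

Definition R2 (L : eqType) (R : rel L) : rel (L * L) :=
  fun u v => [&& u.2 == v.1, R u.1 u.2 & R v.1 v.2].

Lemma lab_col (T : finType) (L : Type) (K : finType) (a : rel T) (R : L -> L -> bool)
  (lam : T -> L) (kap : L -> K) k :
  (forall x y, a x y -> R (lam x) (lam y)) -> (forall u v, R u v -> kap u != kap v) ->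
  #|K| <= k -> colorable (underlying a) k.
Proof.
move=> Hl Hk Hc; apply: (@col_fun _ _ _ (fun x => kap (lam x))) => // x y /orP [/Hl /Hk // | /Hl /Hk].
by rewrite eq_sym.
Qed.

Lemma lab_arc (T : finType) (L : eqType) (a : rel T) (R : rel L) (lam : T -> L) :
  (forall x y, a x y -> R (lam x) (lam y)) ->
  forall p q : arcT a, arcrel a p q ->
    R2 R (lam (val p).1, lam (val p).2) (lam (val q).1, lam (val q).2).
Proof.
move=> Hl [[x y] /= axy] [[y' z] /= ayz]; rewrite /arcrel /R2 /= => /eqP E.
by rewrite E eqxx !Hl // -E.
Qed.

Lemma col_lab (T : finType) (a : rel T) c :
  colorable (underlying a) c -> exists phi : T -> 'I_c, forall x y, a x y -> phi x != phi y.
Proof.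
move=> /colorableP [phi H]; exists phi => x y axy; apply: H; by rewrite /underlying axy.
Qed.

Lemma redA (T : finType) (a : rel T) c :
  colorable (underlying a) c -> colorable (underlying (arcrel a)) c.
Proof.
move=> /col_lab [phi H].
apply: (@lab_col _ _ _ _ (R2 (fun u v : 'I_c => u != v)) _ (fun u => u.1) _ (lab_arc H)); last by rewrite card_ord.
by move=> [u1 u2] [v1 v2]; rewrite /R2 /= => /and3P [/eqP <- ? _].
Qed.

Lemma col_log (T : finType) (a : rel T) k :
  colorable (underlying (arcrel a)) k -> colorable (underlying a) (2 ^ k).
Proof.
move=> /colorableP [phi H].
pose S (x : T) : {ffun 'I_k -> bool} :=
  [ffun z => [exists p : arcT a, ((val p).2 == x) && (phi p == z)]].
have key : forall x y, a x y -> S x != S y.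
  move=> x y axy; pose p0 : arcT a := exist _ (x, y) axy.
  apply/negP => /eqP E; have := congr1 (fun F : {ffun 'I_k -> bool} => F (phi p0)) E.
  rewrite /S /= !ffunE.
  have -> : [exists p : arcT a, ((val p).2 == y) && (phi p == phi p0)].
    by apply/existsP; exists p0; rewrite /= !eqxx.
  move=> /existsP [q /andP [/eqP Hq /eqP Hphi]].
  have : underlying (arcrel a) q p0 by rewrite /underlying /arcrel /= Hq eqxx.
  by move=> /H; rewrite Hphi eqxx.
apply: (@col_fun _ _ _ S); first by rewrite card_ffun card_bool card_ord.
move=> x y /orP [/key // | /key]; by rewrite eq_sym.
Qed.

Definition elems (m i : nat) : nat * nat :=
  if i < m.-1 then (i, i.+1) else if i == m.-1 then (m.-1, 0) else (0, 2).
Definition memb (m z i : nat) : bool := (z == (elems m i).1) || (z == (elems m i).2).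
Definition pk (m i j : nat) : nat :=
  if memb m (elems m i).1 j then (elems m i).2 else (elems m i).1.

Lemma pk_ok m i j : 4 <= m -> i <= m -> j <= m -> i != j ->
  memb m (pk m i j) i && ~~ memb m (pk m i j) j.
Proof.
move=> Hm Hi Hj Hij; rewrite /pk /memb /elems.
repeat (case: ifP => /=); lia.
Qed.

Lemma pk_lt m i j : 4 <= m -> pk m i j < m.
Proof. move=> Hm; rewrite /pk /memb /elems; repeat (case: ifP => /=); lia. Qed.

Lemma redB (T : finType) (a : rel T) k :
  colorable (underlying a) (k.+4).+1 -> colorable (underlying (arcrel a)) k.+4.
Proof.
move=> /col_lab [phi H].
pose kap (u : 'I_(k.+4).+1 * 'I_(k.+4).+1) : 'I_k.+4 := inord (pk k.+4 u.1 u.2).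
apply: (@lab_col _ _ _ _ (R2 (fun u v : 'I_(k.+4).+1 => u != v)) _ kap _ (lab_arc H)); last by rewrite card_ord.
move=> [u1 u2] [v1 v2]; rewrite /R2 /= => /and3P [/eqP E H1 H2]; subst v1.
rewrite /kap /=; apply/negP => /eqP /(congr1 val); rewrite /= !inordK ?pk_lt // => E.
have L1 : forall w : 'I_(k.+4).+1, (w : nat) <= k.+4 by move=> w; rewrite -ltnS ltn_ord.
have := @pk_ok k.+4 u1 u2 isT (L1 _) (L1 _) H1.
have := @pk_ok k.+4 u2 v2 isT (L1 _) (L1 _) H2.
by rewrite E => /andP [-> _] /andP [_].
Qed.

Definition tabl : seq nat := [:: 0; 0; 0; 0; 0; 0; 0; 0; 0; 1; 0; 0; 0; 1; 1; 0; 0; 1; 2; 2; 0; 0; 0; 0; 1; 1; 0; 2; 1; 1; 1; 0; 0; 2; 2; 2; 0; 0; 0; 0; 0; 0; 0; 0; 1; 1; 1; 0; 0; 2; 2; 2; 0; 0; 0; 0; 0; 2; 0; 0; 0; 0; 0; 0].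
Definition tab (i j l : 'I_4) : 'I_3 := inord (nth 0 tabl (16 * i + 4 * j + l)).

Lemma tab_ok (i j l m : 'I_4) : i != j -> j != l -> l != m -> tab i j l != tab j l m.
Proof.
case: i => [[|[|[|[|?]]]] Hi] //; case: j => [[|[|[|[|?]]]] Hj] //;
case: l => [[|[|[|[|?]]]] Hl] //; case: m => [[|[|[|[|?]]]] Hm] //;
rewrite /tab -!val_eqE /= ?inordK //.
Qed.

Lemma redC (T : finType) (a : rel T) :
  colorable (underlying a) 4 -> colorable (underlying (arcrel (arcrel a))) 3.
Proof.
move=> /col_lab [phi H].
have H1 := @lab_arc _ _ a (fun u v : 'I_4 => u != v) phi H.
have H2 := @lab_arc _ _ (arcrel a) _ _ H1.
pose kap (u : ('I_4 * 'I_4) * ('I_4 * 'I_4)) : 'I_3 := tab u.1.1 u.1.2 u.2.2.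
apply: (@lab_col _ _ _ _ (R2 (R2 (fun u v : 'I_4 => u != v))) _ kap _ H2); last by rewrite card_ord.
move=> [[i j] [j' l]] [[j'' l'] [l'' m]]; rewrite /R2 /= => /and3P [/eqP E /and3P [/eqP E1 G1 G3] /and3P [/eqP E2 G4 G5]].
case: E => ? ?; subst; rewrite /kap /=; exact: tab_ok.
Qed.

Lemma reduce (T : finType) (a : rel T) c :
  4 <= c -> colorable (underlying a) c -> colorable (underlying (arcrel (arcrel a))) c.-1.
Proof.
case: c => [|[|[|[|[|k]]]]] //= _.
- exact: redC.
- by move=> /redB /redA.
Qed.

Section Homs.
Variables (T T' : finType) (a : rel T) (a' : rel T') (h : T -> T').
Hypothesis Hh : forall x y, a x y -> a' (h x) (h y).

Definition hom_arc (p : arcT a) : arcT a' :=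
  exist _ (h (val p).1, h (val p).2) (Hh (valP p)).

Lemma hom_arcP p q : arcrel a p q -> arcrel a' (hom_arc p) (hom_arc q).
Proof. by rewrite /arcrel /= => /eqP ->. Qed.
End Homs.

Section Prods.
Variables (T U : finType) (a : rel T) (b : rel U).

Lemma prod_arc_proof (u : arcT a * arcT b) :
  prodrel a b ((val u.1).1, (val u.2).1) ((val u.1).2, (val u.2).2).
Proof. by rewrite /prodrel /= (valP u.1) (valP u.2). Qed.

Definition prod_arc (u : arcT a * arcT b) : arcT (prodrel a b) :=
  exist _ (((val u.1).1, (val u.2).1), ((val u.1).2, (val u.2).2)) (prod_arc_proof u).

Lemma prod_arcP u v : prodrel (arcrel a) (arcrel b) u v ->
  arcrel (prodrel a b) (prod_arc u) (prod_arc v).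
Proof. by rewrite /prodrel /arcrel /= => /andP [/eqP -> /eqP ->]. Qed.

Lemma rev_arc_proof (u : arcT a * arcT b) :
  prodrel a (revrel b) ((val u.1).1, (val u.2).2) ((val u.1).2, (val u.2).1).
Proof. by rewrite /prodrel /revrel /= (valP u.1) (valP u.2). Qed.

Definition rev_arc (u : arcT a * arcT b) : arcT (prodrel a (revrel b)) :=
  exist _ (((val u.1).1, (val u.2).2), ((val u.1).2, (val u.2).1)) (rev_arc_proof u).

Lemma rev_arcP u v : prodrel (arcrel a) (revrel (arcrel b)) u v ->
  arcrel (prodrel a (revrel b)) (rev_arc u) (rev_arc v).
Proof. by rewrite /prodrel /revrel /arcrel /= => /andP [/eqP -> /eqP ->]. Qed.
End Prods.

Definition arc2 (T : finType) (a : rel T) := arcrel (arcrel a).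
Arguments arc2 {T} a _ _.

Lemma step_prod (T U : finType) (a : rel T) (b : rel U) c :
  4 <= c -> colorable (underlying (prodrel a b)) c ->
  colorable (underlying (prodrel (arc2 a) (arc2 b))) c.-1.
Proof.
move=> Hc /(reduce Hc) H.
apply: (hom_col (hom_U (fun x y (E : prodrel (arc2 a) (arc2 b) x y) =>
   hom_arcP (@prod_arcP _ _ a b) (prod_arcP E))) H).
Qed.

Lemma step_rev (T U : finType) (a : rel T) (b : rel U) c :
  4 <= c -> colorable (underlying (prodrel a (revrel b))) c ->
  colorable (underlying (prodrel (arc2 a) (revrel (arc2 b)))) c.-1.
Proof.
move=> Hc /(reduce Hc) H.
apply: (hom_col (hom_U (fun x y (E : prodrel (arc2 a) (revrel (arc2 b)) x y) =>
   hom_arcP (@rev_arcP _ _ a b) (rev_arcP E))) H).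
Qed.

Lemma arc2_digraph (T : finType) (a : rel T) : is_digraph a -> is_digraph (arc2 a).
Proof. by move=> Ha; do 2 apply: arc_digraph. Qed.

Lemma lb1 (T : finType) (a : rel T) N :
  is_digraph a -> 2 ^ N <= chiD a -> N <= chiD (arcrel a).
Proof.
move=> Ha HN.
have H := chi_col (U_loopless (arc_digraph Ha)).
have := chi_le (col_log H); rewrite -/(chiD a) -/(chiD (arcrel a)) => H2.
by rewrite -(@leq_exp2l 2) //; apply: leq_trans HN H2.
Qed.

Lemma lb2 (T : finType) (a : rel T) N :
  is_digraph a -> 2 ^ (2 ^ N) <= chiD a -> N <= chiD (arc2 a).
Proof. move=> Ha H; apply: lb1; first exact: arc_digraph. exact: lb1. Qed.

Lemma wo (P : nat -> Prop) k : P k -> exists m, is_min P m.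
Proof.
move: k; suff H : forall n k, k < n -> P k -> exists m, is_min P m.
  by move=> k; exact: (H k.+1 k (ltnSn k)).
elim=> [//|n IH] k Hk Pk.
case: (classic (exists j, j < k /\ P j)) => [[j [Hj Pj]] | Hno].
- apply: (IH j) => //; lia.
- exists k; split => // j Pj; case: (leqP k j) => // Hjk; exfalso; apply: Hno; by exists j.
Qed.

Lemma natmin_spec (P : nat -> Prop) : (exists k, P k) -> is_min P (natmin P).
Proof. move=> [k Pk]; rewrite /natmin; apply: epsilon_spec; exact: wo Pk. Qed.

Lemma natmin_mono (V : nat -> nat -> Prop) :
  (forall n m k, n <= m -> V m k -> V n k) -> (forall n, exists k, V n k) ->
  forall n m, n <= m -> natmin (V n) <= natmin (V m).
Proof.
move=> HV Hne n m Hnm.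
have [Hm _] := natmin_spec (Hne m).
have [_ Hn] := natmin_spec (Hne n).
apply: Hn; exact: HV Hm.
Qed.

Lemma dich (u : nat -> nat) (B : nat) :
  (forall n m, n <= m -> u n <= u m) ->
  (forall n0, (forall n, n0 <= n -> u n = u n0) -> B < u n0 -> False) ->
  (forall n, u n <= B) \/ tends_to_infty u.
Proof.
move=> Hmono Hkey.
case: (classic (tends_to_infty u)) => Ht; [by right | left].
have [M HM] : exists M, forall n, u n <= M.
  apply: NNPP => Hno; apply: Ht => M.
  apply: NNPP => HN; apply: Hno; exists M => n; apply: NNPP => Hn.
  apply: HN; exists n => m Hm; have := Hmono _ _ Hm; lia.
have stab : forall d n0, M - u n0 <= d -> exists n1, forall n, n1 <= n -> u n = u n1.
  elim=> [|d IH] n0 Hd.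
  - exists n0 => n Hn; have := Hmono _ _ Hn; have := HM n; have := HM n0; lia.
  - case: (classic (exists n, n0 <= n /\ u n <> u n0)) => [[n [Hn Hne]] | Hno].
    + apply: (IH n); have := Hmono _ _ Hn; have := HM n; lia.
    + exists n0 => n Hn; apply: NNPP => E; apply: Hno; by exists n.
have [n1 Hn1] := stab _ 0 (leqnn _).
move=> n; case: (leqP (u n) B) => // HB; exfalso.
apply: (Hkey (maxn n1 n)).
- move=> m Hm; rewrite Hn1; last lia. by rewrite Hn1 //; lia.
- have := Hmono n (maxn n1 n); lia.
Qed.

Definition Kn (n : nat) : rel 'I_n := fun x y => x != y.
Arguments Kn : clear implicits.

Lemma Kn_graph n : is_graph (Kn n).
Proof. by split => [x|x y]; rewrite /Kn ?eqxx // eq_sym. Qed.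

Lemma Kn_chi n : n <= chi (Kn n).
Proof.
have := complete_col (e := Kn n) (fun x y (H : x != y) => H) (chi_col (fun x => (Kn_graph n).1 x)).
by rewrite card_ord.
Qed.

Lemma Kn_chiD n : n <= chiD (Kn n).
Proof.
have L : forall x, ~~ underlying (Kn n) x x by move=> x; rewrite /underlying /Kn eqxx.
have := complete_col (e := underlying (Kn n)) (fun x y (H : x != y) => introT orP (or_introl H)) (chi_col L).
by rewrite card_ord.
Qed.

Lemma g_ne n : exists k, g_vals n k.
Proof.
exists (chiD (prodrel (Kn n) (Kn n))); exists 'I_n, 'I_n, (Kn n), (Kn n); split => //;
 try exact: Kn_chiD; exact: (Kn_graph n).1.
Qed.

Lemma h_ne n : exists k, h_vals n k.
Proof.
eexists; exists 'I_n, 'I_n, (Kn n), (Kn n); split; try reflexivity;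
 try exact: Kn_chiD; exact: (Kn_graph n).1.
Qed.

Lemma f_ne n : exists k, f_vals n k.
Proof.
eexists; exists 'I_n, 'I_n, (Kn n), (Kn n); split; try reflexivity;
 try exact: Kn_chi; exact: Kn_graph.
Qed.

Lemma g_mono n m : n <= m -> g n <= g m.
Proof.
apply: natmin_mono; last exact: g_ne.
move=> {}n {}m k Hnm [T [U [a [b [Ha Hb H1 H2 H3]]]]].
exists T, U, a, b; split => //; lia.
Qed.

Lemma h_mono n m : n <= m -> h n <= h m.
Proof.
apply: natmin_mono; last exact: h_ne.
move=> {}n {}m k Hnm [T [U [a [b [Ha Hb H1 H2 H3]]]]].
exists T, U, a, b; split => //; lia.
Qed.

Lemma f_mono n m : n <= m -> f n <= f m.
Proof.
apply: natmin_mono; last exact: f_ne.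
move=> {}n {}m k Hnm [T [U [a [b [Ha Hb H1 H2 H3]]]]].
exists T, U, a, b; split => //; lia.
Qed.

Lemma prod_digraph (T U : finType) (a : rel T) (b : rel U) :
  is_digraph a -> is_digraph (prodrel a b).
Proof. by move=> Ha p; rewrite /prodrel (negbTE (Ha _)). Qed.

Lemma prod_rev_digraph (T U : finType) (a : rel T) (b : rel U) :
  is_digraph a -> is_digraph (prodrel a (revrel b)).
Proof. by move=> Ha p; rewrite /prodrel (negbTE (Ha _)). Qed.

Lemma colD (T : finType) (a : rel T) : is_digraph a -> colorable (underlying a) (chiD a).
Proof. move=> Ha; exact: (chi_col (U_loopless Ha)). Qed.

Lemma g_key n0 : (forall n, n0 <= n -> g n = g n0) -> 3 < g n0 -> False.
Proof.
move=> Hst H3.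
set n := maxn n0 (2 ^ (2 ^ n0)).
have Hgn : g n = g n0 by apply: Hst; lia.
have [Hv _] := natmin_spec (g_ne n).
have [_ Hmin] := natmin_spec (g_ne n0).
move: Hv; rewrite -/(g n) Hgn => [[T [U [a [b [Ha Hb Hca Hcb Hp]]]]]].
have Hc := colD (prod_digraph b Ha); rewrite Hp in Hc.
have := chi_le (step_prod H3 Hc) => Hle.
have : g_vals n0 (chiD (prodrel (arc2 a) (arc2 b))).
  exists _, _, (arc2 a), (arc2 b); split => //; try exact: arc2_digraph;
  apply: lb2 => //; lia.
move=> /Hmin; rewrite -/(g n0) /chiD; lia.
Qed.

Lemma h_key n0 : (forall n, n0 <= n -> h n = h n0) -> 3 < h n0 -> False.
Proof.
move=> Hst H3.
set n := maxn n0 (2 ^ (2 ^ n0)).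
have Hgn : h n = h n0 by apply: Hst; lia.
have [Hv _] := natmin_spec (h_ne n).
have [_ Hmin] := natmin_spec (h_ne n0).
move: Hv; rewrite -/(h n) Hgn => [[T [U [a [b [Ha Hb Hca Hcb Hp]]]]]].
have Hc1 := colD (prod_digraph b Ha).
have Hc2 := colD (prod_rev_digraph b Ha).
have Hc1' := col_mono Hc1 (leq_trans (leq_maxl _ _) (eq_leq Hp)).
have Hc2' := col_mono Hc2 (leq_trans (leq_maxr _ _) (eq_leq Hp)).
have Hle1 := chi_le (step_prod H3 Hc1').
have Hle2 := chi_le (step_rev H3 Hc2').
have : h_vals n0 (maxn (chiD (prodrel (arc2 a) (arc2 b))) (chiD (prodrel (arc2 a) (revrel (arc2 b))))).
  exists _, _, (arc2 a), (arc2 b); split => //; try exact: arc2_digraph;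
  apply: lb2 => //; lia.
move=> /Hmin; rewrite -/(h n0) /chiD; lia.
Qed.

Lemma Qlem c N : exists M, forall (T U : finType) (a : rel T) (b : rel U),
  is_digraph a -> is_digraph b -> M <= chiD a -> M <= chiD b ->
  colorable (underlying (prodrel a b)) c ->
  colorable (underlying (prodrel a (revrel b))) c ->
  exists (T' U' : finType) (a' : rel T') (b' : rel U'),
    [/\ is_digraph a', is_digraph b', N <= chiD a', N <= chiD b' &
        colorable (underlying (prodrel a' b')) 3 /\
        colorable (underlying (prodrel a' (revrel b'))) 3].
Proof.
elim: c => [|c [M' IH]].
  exists N => T U a b Ha Hb H1 H2 C1 C2; exists T, U, a, b; split => //; split; [apply: (col_mono C1) | apply: (col_mono C2)]; lia.
case: (leqP c.+1 3) => Hc.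
  exists N => T U a b Ha Hb H1 H2 C1 C2; exists T, U, a, b; split => //; split; [apply: (col_mono C1) | apply: (col_mono C2)]; lia.
exists (2 ^ (2 ^ M')) => T U a b Ha Hb H1 H2 C1 C2.
apply: (IH _ _ (arc2 a) (arc2 b)); try exact: arc2_digraph; try exact: lb2.
- exact: (step_prod Hc C1).
- exact: (step_rev Hc C2).
Qed.

Lemma combine (T U : finType) (a : rel T) (b : rel U) :
  colorable (underlying (prodrel a b)) 3 ->
  colorable (underlying (prodrel a (revrel b))) 3 ->
  colorable (prodrel (underlying a) (underlying b)) 9.
Proof.
move=> /colorableP [c1 H1] /colorableP [c2 H2].
apply: (@col_fun _ _ _ (fun p => (c1 p, c2 p))); first by rewrite card_prod !card_ord.
move=> [x y] [x' y']; rewrite /prodrel /underlying /revrel /= xpair_eqE negb_and.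
case/andP => /orP [A|A] /orP [B|B].
- by rewrite H1 // /underlying /prodrel /= A B.
- by rewrite H2 ?orbT // /underlying /prodrel /revrel /= A B.
- by rewrite H2 ?orbT // /underlying /prodrel /revrel /= A B ?orbT.
- by rewrite H1 // /underlying /prodrel /= A B ?orbT.
Qed.

Lemma f_key n0 : (forall n, n0 <= n -> f n = f n0) -> 9 < f n0 -> False.
Proof.
move=> Hst H9.
have [M HM] := Qlem (f n0) n0.
set n := maxn n0 M.
have Hgn : f n = f n0 by apply: Hst; lia.
have [Hv _] := natmin_spec (f_ne n).
have [_ Hmin] := natmin_spec (f_ne n0).
move: Hv; rewrite -/(f n) Hgn => [[T [U [e [e' [[Ge Se] [Ge' Se'] Hca Hcb Hp]]]]]].
have chiDe : forall (V : finType) (r : rel V), (forall x, ~~ r x x) -> chi r <= chiD r.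
  move=> V r Hr; apply: chi_le; apply: (@hom_col _ _ _ _ id _ _ (chi_col (U_loopless Hr))).
  by move=> x y E; rewrite /underlying /= E.
have Hpl : forall x, ~~ prodrel e e' x x by move=> x; rewrite /prodrel (negbTE (Ge _)).
have Cp := chi_col Hpl; rewrite Hp in Cp.
have C1 : colorable (underlying (prodrel e e')) (f n0).
  apply: (@hom_col _ _ _ _ id _ _ Cp) => [[x y] [x' y']].
  by rewrite /underlying /prodrel /= Se (Se' y') orbb.
have C2 : colorable (underlying (prodrel e (revrel e'))) (f n0).
  apply: (@hom_col _ _ _ _ id _ _ Cp) => [[x y] [x' y']].
  by rewrite /underlying /prodrel /revrel /= Se (Se' y') orbb.
have [T' [U' [a' [b' [Ha' Hb' Ha'N Hb'N [D1 D2]]]]]] :=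
  HM T U e e' Ge Ge' (leq_trans (leq_maxr n0 M) (leq_trans Hca (chiDe _ _ Ge)))
    (leq_trans (leq_maxr n0 M) (leq_trans Hcb (chiDe _ _ Ge'))) C1 C2.
have Hle := chi_le (combine D1 D2).
have : f_vals n0 (chi (prodrel (underlying a') (underlying b'))).
  exists _, _, (underlying a'), (underlying b'); split => //.
  - by split; [exact: U_loopless | move=> x y; rewrite /underlying orbC].
  - by split; [exact: U_loopless | move=> x y; rewrite /underlying orbC].
move=> /Hmin; rewrite -/(f n0); lia.
Qed.

Theorem mainTheorem13 :
  ((forall n, g n <= 3) \/ tends_to_infty g) /\
  ((forall n, h n <= 3) \/ tends_to_infty h) /\
  ((forall n, f n <= 9) \/ tends_to_infty f).
Proof.
split; [|split].
- apply: dich; [exact: g_mono | exact: g_key].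
- apply: dich; [exact: h_mono | exact: h_key].
- apply: dich; [exact: f_mono | exact: f_key].
Qed.
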